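(* Let $G$ be a finite group with identity $e$, and let $\mathcal{B}$ be the set of bases of a rank-$3$ matroid on ground set $G$ invariant under left multiplication by $G$. Let $g,h\in G$ be such that each of the triples $(e,g,gh)$, $(e,g,h)$, $(e,g,g^{-1})$ consists of pairwise distinct elements. If $f_{g,gh}\subseteq\mathcal{B}$, then $f_{g,g^{-1}}\subseteq\mathcal{B}$ or $f_{g,h}\subseteq\mathcal{B}$.
   Context: $G$ acts on $\binom{G}{3}$ by $x\cdot\{a,b,c\}=\{xa,xb,xc\}$. For $g,h\in G$ with $e,g,h$ pairwise distinct, $f_{g,h}=\{\{a,ag,ah\}\mid a\in G\}$ (a $G$-orbit, with $f_{g,h}=f_{h,g}$). A matroid on ground set $G$ is invariant if its set of bases is preserved by this action. *)

(* Defs.v *)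
From mathcomp Require Import all_boot all_fingroup.
Set Implicit Arguments. Unset Strict Implicit. Unset Printing Implicit Defensive.
Local Open Scope group_scope.

Definition is_matroid_bases (T : finType) (B : {set {set T}}) : Prop :=
  B != set0 /\
  forall B1 B2, B1 \in B -> B2 \in B ->
    forall x, x \in B1 :\: B2 ->
      exists2 y, y \in B2 :\: B1 & (B1 :\ x) :|: [set y] \in B.

Definition has_rank (T : finType) (B : {set {set T}}) (r : nat) : Prop :=
  forall b, b \in B -> #|b| = r.

Definition lmul_set (gT : finGroupType) (x : gT) (S : {set gT}) : {set gT} :=
  [set x * a | a in S].

Definition invariant_bases (gT : finGroupType) (B : {set {set gT}}) : Prop :=
  forall x b, b \in B -> lmul_set x b \in B.

Definition forb (gT : finGroupType) (g h : gT) : {set {set gT}} :=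
  [set [set a; a * g; a * h] | a : gT].

Definition distinct3 (T : eqType) (a b c : T) : bool :=
  [&& a != b, a != c & b != c].

(* Main.v *)
Require Import Defs.
From mathcomp Require Import all_boot all_fingroup.
Local Open Scope group_scope.

Lemma lmul3 (gT : finGroupType) (a x y z : gT) :
  lmul_set a [set x; y; z] = [set a * x; a * y; a * z].
Proof. by rewrite /lmul_set !imsetU !imset_set1. Qed.

Lemma orbit_sub (gT : finGroupType) (B : {set {set gT}}) (g k : gT) :
  invariant_bases B -> [set 1; g; k] \in B -> forb g k \subset B.
Proof.
move=> inv H; apply/subsetP => S /imsetP [a _ ->].
by have := inv a _ H; rewrite lmul3 mulg1.
Qed.

Theorem mainTheorem9 (gT : finGroupType) (B : {set {set gT}}) (g h : gT) :
  is_matroid_bases B -> has_rank B 3 -> invariant_bases B ->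
  distinct3 1 g (g * h) -> distinct3 1 g h -> distinct3 1 g g^-1 ->
  forb g (g * h) \subset B ->
  forb g g^-1 \subset B \/ forb g h \subset B.
Proof.
move=> [_ ex] _ inv /and3P[d1 d2 d3] /and3P[e1 e2 e3] /and3P[f1 f2 f3] sub.
have Y : [set 1; g; g * h] \in B.
  apply: (subsetP sub); apply/imsetP; exists 1 => //; by rewrite !mul1g.
have X : [set g^-1; 1; h] \in B.
  by have := inv g^-1 _ Y; rewrite lmul3 mulg1 mulVg mulKg.
have [E|ne] := eqVneq (g * h) g^-1.
  by left; apply: orbit_sub => //; rewrite -E.
have ghY : g * h \in [set 1; g; g * h] :\: [set g^-1; 1; h].
  rewrite !inE eqxx !orbT andbT (negbTE ne) eq_sym (negbTE d2) /=.
  apply/negP => /eqP E.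
  have G1 : g = 1 by rewrite -(mulgK h g) E mulgV.
  by rewrite G1 eqxx in e1.
have [y yin N] := ex _ _ Y X _ ghY.
have E2 : ([set 1; g; g * h] :\ (g * h)) :|: [set y] = [set 1; g; y].
  apply/setP => z; rewrite !inE.
  case: (eqVneq z (g * h)) => [->|_] /=; last by rewrite orbF.
  by rewrite [g * h == 1]eq_sym [g * h == g]eq_sym (negbTE d2) (negbTE d3).
rewrite E2 in N.
move: yin; rewrite !inE => /andP [yY] /orP [/orP [] |] /eqP yE.
- by left; apply: orbit_sub => //; rewrite -yE.
- by subst y; rewrite eqxx in yY.
- by right; apply: orbit_sub => //; rewrite -yE.
Qed.
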